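(* Consider a two-player general-sum bimatrix game with payoff matrices $\mathbf{R}=(R_1,R_2)$, together with the risk-averse, boundedly rational objectives and the associated modified 4-player game described in the context. If the modified 4-player game is strictly monotone, i.e. its gradient operator $F(\cdot;\mathbf{R})$ satisfies $(z-z')^T(F(z;\mathbf{R})-F(z';\mathbf{R}))>0$ for all $z\neq z'$ in $\mathcal{Z}$, then the risk-adjusted quantal response equilibrium (RQE) of the original two-player game is unique: any two RQEs of the original game coincide.
   Context: Two players $i\in\{1,2\}$ have finite action sets $\mathcal{A}_1,\mathcal{A}_2$; $-i$ denotes the player other than $i$, and $\Delta_n$ denotes the probability simplex in $\mathbb{R}^n$. The payoff matrices are $R_1\in\mathbb{R}^{|\mathcal{A}_1|\times|\mathcal{A}_2|}$ and $R_2\in\mathbb{R}^{|\mathcal{A}_2|\times|\mathcal{A}_1|}$, where $[R_i]_{mn}$ is the payoff of player $i$ when $i$ plays $m$ and $-i$ plays $n$. For each $i$ fix $\epsilon_i>0$, a differentiable strictly convex function $\nu_i$ (defined on an open set containing $\Delta_{|\mathcal{A}_i|}$), and a differentiable penalty function $D_i:\Delta_{|\mathcal{A}_{-i}|}\times\Delta_{|\mathcal{A}_{-i}|}\to\mathbb{R}$ that is convex in its first argument. Player $i$ chooses a mixed strategy $\pi_i\in\Delta_{|\mathcal{A}_i|}$ to minimize $$f_i(\pi_i,\pi_{-i};R_i)=\sup_{p_i\in\Delta_{|\mathcal{A}_{-i}|}}\big[-\pi_i^TR_ip_i-D_i(p_i,\pi_{-i})\big]+\epsilon_i\nu_i(\pi_i).$$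 An RQE is a pair $(\pi_1^*,\pi_2^* )\in\Delta_{|\mathcal{A}_1|}\times\Delta_{|\mathcal{A}_2|}$ with $f_i(\pi_i^*,\pi_{-i}^*;R_i)\le f_i(\pi_i,\pi_{-i}^*;R_i)$ for all $\pi_i\in\Delta_{|\mathcal{A}_i|}$ and both $i$. The modified 4-player game has joint strategy $z=(\pi_1,\pi_2,p_1,p_2)\in\mathcal{Z}=\Delta_{|\mathcal{A}_1|}\times\Delta_{|\mathcal{A}_2|}\times\Delta_{|\mathcal{A}_2|}\times\Delta_{|\mathcal{A}_1|}$; player $\pi_i$ minimizes $J_i(z)=-\pi_i^TR_ip_i-D_i(p_i,\pi_{-i})+\epsilon_i\nu_i(\pi_i)$ over $\pi_i$, and adversary $p_i$ minimizes $\bar J_i(z)=\pi_i^TR_ip_i+D_i(p_i,\pi_{-i})-\epsilon_i\nu_i(\pi_i)$ over $p_i$. Its gradient operator is $$F(z;\mathbf{R})=\big(-R_1p_1+\epsilon_1\nabla\nu_1(\pi_1),\ -R_2p_2+\epsilon_2\nabla\nu_2(\pi_2),\ R_1^T\pi_1+\nabla_{p_1}D_1(p_1,\pi_2),\ R_2^T\pi_2+\nabla_{p_2}D_2(p_2,\pi_1)\big).$$ *)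

(* Defs.v *)
From HB Require Import structures.
From mathcomp Require Import all_boot all_order all_algebra.
From mathcomp Require Import all_classical all_reals all_analysis.
Set Implicit Arguments. Unset Strict Implicit. Unset Printing Implicit Defensive.
Import Order.TTheory GRing.Theory Num.Theory.
Import numFieldNormedType.Exports.
Local Open Scope classical_set_scope.
Local Open Scope ring_scope.

Definition simplex (R : realType) (n : nat) : set 'rV[R]_n :=
  [set x | (forall j, 0 <= x 0 j) /\ \sum_j x 0 j = 1].
Arguments simplex : clear implicits.

Definition dotp (R : realType) (n : nat) (u v : 'rV[R]_n) : R := (u *m v^T) 0 0.

Definition grad (R : realType) (n : nat) (f : 'rV[R]_n -> R) (x : 'rV[R]_n)
  : 'rV[R]_n := \row_j ('d f x (delta_mx 0 j : 'rV[R]_n)).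

Definition gradp (R : realType) (m : nat) (D : 'rV[R]_m * 'rV[R]_m -> R)
  (p q : 'rV[R]_m) : 'rV[R]_m := grad (fun x => D (x, q)) p.

Definition strictly_convex_on (R : realType) (n : nat) (A : set 'rV[R]_n)
  (f : 'rV[R]_n -> R) : Prop :=
  forall x y, A x -> A y -> x <> y -> forall t : R, 0 < t < 1 ->
    f (t *: x + (1 - t) *: y) < t * f x + (1 - t) * f y.

Definition convex_first_arg (R : realType) (m : nat)
  (D : 'rV[R]_m * 'rV[R]_m -> R) : Prop :=
  forall q, simplex R m q -> forall p p', simplex R m p -> simplex R m p' ->
    forall t : R, 0 <= t <= 1 ->
      D (t *: p + (1 - t) *: p', q) <= t * D (p, q) + (1 - t) * D (p', q).

(* f_i(pi_i, pi_{-i}; R_i) = sup_{p in Delta} [- pi^T R p - D(p, pi_{-i})] + eps nu(pi) *)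
Definition fobj (R : realType) (n m : nat) (Rm : 'M[R]_(n, m))
  (D : 'rV[R]_m * 'rV[R]_m -> R) (eps : R) (nu : 'rV[R]_n -> R)
  (pi : 'rV[R]_n) (q : 'rV[R]_m) : R :=
  sup [set - dotp (pi *m Rm) p - D (p, q) | p in simplex R m] + eps * nu pi.

Definition is_RQE (R : realType) (n1 n2 : nat)
  (R1 : 'M[R]_(n1, n2)) (R2 : 'M[R]_(n2, n1))
  (D1 : 'rV[R]_n2 * 'rV[R]_n2 -> R) (D2 : 'rV[R]_n1 * 'rV[R]_n1 -> R)
  (eps1 eps2 : R) (nu1 : 'rV[R]_n1 -> R) (nu2 : 'rV[R]_n2 -> R)
  (pi1 : 'rV[R]_n1) (pi2 : 'rV[R]_n2) : Prop :=
  [/\ simplex R n1 pi1, simplex R n2 pi2,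
      (forall pi1', simplex R n1 pi1' ->
         fobj R1 D1 eps1 nu1 pi1 pi2 <= fobj R1 D1 eps1 nu1 pi1' pi2) &
      (forall pi2', simplex R n2 pi2' ->
         fobj R2 D2 eps2 nu2 pi2 pi1 <= fobj R2 D2 eps2 nu2 pi2' pi1)].

(* (z - z')^T (F(z;R) - F(z';R)) for z = (pi1, pi2, p1, p2). *)
Definition F_pairing (R : realType) (n1 n2 : nat)
  (R1 : 'M[R]_(n1, n2)) (R2 : 'M[R]_(n2, n1))
  (D1 : 'rV[R]_n2 * 'rV[R]_n2 -> R) (D2 : 'rV[R]_n1 * 'rV[R]_n1 -> R)
  (eps1 eps2 : R) (nu1 : 'rV[R]_n1 -> R) (nu2 : 'rV[R]_n2 -> R)
  (pi1 : 'rV[R]_n1) (pi2 : 'rV[R]_n2) (p1 : 'rV[R]_n2) (p2 : 'rV[R]_n1)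
  (pi1' : 'rV[R]_n1) (pi2' : 'rV[R]_n2) (p1' : 'rV[R]_n2) (p2' : 'rV[R]_n1) : R :=
  let F1 pi1 p1 := - (p1 *m R1^T) + eps1 *: grad nu1 pi1 in
  let F2 pi2 p2 := - (p2 *m R2^T) + eps2 *: grad nu2 pi2 in
  let F3 pi1 pi2 p1 := pi1 *m R1 + gradp D1 p1 pi2 in
  let F4 pi1 pi2 p2 := pi2 *m R2 + gradp D2 p2 pi1 in
  dotp (pi1 - pi1') (F1 pi1 p1 - F1 pi1' p1')
  + dotp (pi2 - pi2') (F2 pi2 p2 - F2 pi2' p2')
  + dotp (p1 - p1') (F3 pi1 pi2 p1 - F3 pi1' pi2' p1')
  + dotp (p2 - p2') (F4 pi1 pi2 p2 - F4 pi1' pi2' p2').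

(* Main.v *)
Require Import Defs.
From HB Require Import structures.
From mathcomp Require Import all_boot all_order all_algebra.
From mathcomp Require Import all_classical all_reals all_analysis.
From mathcomp Require Import ring lra.
Import Order.TTheory GRing.Theory Num.Theory.
Import numFieldNormedType.Exports.
Local Open Scope classical_set_scope.
Local Open Scope ring_scope.

Section Helpers.
Variable R : realType.

Lemma dotpE n (u v : 'rV[R]_n) : dotp u v = \sum_j u 0 j * v 0 j.
Proof. by rewrite /dotp mxE; apply: eq_bigr => j _; rewrite mxE. Qed.

Lemma dotpC n (u v : 'rV[R]_n) : dotp u v = dotp v u.
Proof. by rewrite !dotpE; apply: eq_bigr => j _; rewrite mulrC. Qed.

Lemma dotpDl n (u u' v : 'rV[R]_n) : dotp (u + u') v = dotp u v + dotp u' v.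
Proof. by rewrite !dotpE -big_split; apply: eq_bigr => j _; rewrite mxE mulrDl. Qed.

Lemma dotpNl n (u v : 'rV[R]_n) : dotp (- u) v = - dotp u v.
Proof. by rewrite !dotpE -sumrN; apply: eq_bigr => j _; rewrite mxE mulNr. Qed.

Lemma dotpZl n a (u v : 'rV[R]_n) : dotp (a *: u) v = a * dotp u v.
Proof. by rewrite !dotpE mulr_sumr; apply: eq_bigr => j _; rewrite mxE mulrA. Qed.

Lemma dotpDr n (u v v' : 'rV[R]_n) : dotp u (v + v') = dotp u v + dotp u v'.
Proof. by rewrite dotpC dotpDl !(dotpC _ u). Qed.

Lemma dotpNr n (u v : 'rV[R]_n) : dotp u (- v) = - dotp u v.
Proof. by rewrite dotpC dotpNl dotpC. Qed.

Lemma dotpZr n a (u v : 'rV[R]_n) : dotp u (a *: v) = a * dotp u v.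
Proof. by rewrite dotpC dotpZl dotpC. Qed.

Lemma dotpBl n (u u' v : 'rV[R]_n) : dotp (u - u') v = dotp u v - dotp u' v.
Proof. by rewrite dotpDl dotpNl. Qed.

Lemma dotpBr n (u v v' : 'rV[R]_n) : dotp u (v - v') = dotp u v - dotp u v'.
Proof. by rewrite dotpDr dotpNr. Qed.

Lemma dotp_mulT n m (d : 'rV[R]_n) (p : 'rV[R]_m) (M : 'M[R]_(n, m)) :
  dotp d (p *m M^T) = dotp (d *m M) p.
Proof. by rewrite /dotp trmx_mul trmxK mulmxA. Qed.

Lemma dotp_grad n (f : 'rV[R]_n -> R) x v : dotp v (grad f x) = 'd f x v.
Proof.
rewrite dotpE {2}(row_sum_delta v) linear_sum; apply: eq_bigr => j _.
by rewrite linearZ /= mxE.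
Qed.

Lemma simplex_le1 n (p : 'rV[R]_n) j : simplex R n p -> p 0 j <= 1.
Proof.
move=> [p0 <-]; rewrite (bigD1 j) //= lerDl sumr_ge0 // => i _; exact: p0.
Qed.

Lemma dotp_bound n (v p : 'rV[R]_n) : simplex R n p ->
  `|dotp v p| <= \sum_j `|v 0 j|.
Proof.
move=> Sp; rewrite dotpE; apply: (le_trans (ler_norm_sum _ _ _)).
apply: ler_sum => j _; rewrite normrM.
have [p0 _] := Sp; rewrite (ger0_norm (p0 j)).
by apply: ler_piMr => //; exact: simplex_le1.
Qed.

Lemma simplex_conv n (x y : 'rV[R]_n) t : simplex R n x -> simplex R n y ->
  0 <= t <= 1 -> simplex R n (t *: (y - x) + x).
Proof.
move=> [x0 x1] [y0 y1] /andP[t0 t1]; split.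
  move=> j; rewrite !mxE.
  have := x0 j; have := y0 j => ? ?; nra.
rewrite (eq_bigr (fun j => t * y 0 j + (1 - t) * x 0 j)); last first.
  by move=> j _; rewrite !mxE; ring.
by rewrite big_split /= -!mulr_sumr x1 y1; ring.
Qed.

Lemma dotp_continuous n (v : 'rV[R]_n) : continuous (fun p : 'rV[R]_n => dotp v p).
Proof.
move=> p.
suff H : forall r : seq 'I_n, (fun x : 'rV[R]_n => \sum_(j <- r) v 0 j * x 0 j) @ p -->
   \sum_(j <- r) v 0 j * p 0 j.
  have E : (fun p => dotp v p) = (fun x : 'rV[R]_n => \sum_(j <- index_enum _) v 0 j * x 0 j).
    by apply/funext => x; rewrite dotpE.
  rewrite /continuous_at E.

rewrite dotpE; exact: H.
elim=> [|j r IH].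
  rewrite (_ : (fun x : 'rV[R]_n => \sum_(j <- [::]) v 0 j * x 0 j) = cst 0).
    by rewrite big_nil; apply: cst_continuous.
  by apply/funext => x; rewrite big_nil.
rewrite (_ : (fun x : 'rV[R]_n => \sum_(j0 <- j :: r) v 0 j0 * x 0 j0) =
   (fun x => v 0 j * x 0 j + \sum_(j0 <- r) v 0 j0 * x 0 j0)); last first.
  by apply/funext => x; rewrite big_cons.
rewrite big_cons.
apply: (@cvgD _ _ _ (nbhs p) (nbhs_filter p) (fun x : 'rV[R]_n => v 0 j * x 0 j) (fun x => \sum_(j0 <- r) v 0 j0 * x 0 j0)) => //.
apply: cvgMl_tmp; exact: coord_continuous.
Qed.

Lemma simplex_closed n : closed (simplex R n).
Proof.
have -> : simplex R n = (\bigcap_(j in setT) ((fun x : 'rV[R]_n => x 0 j) @^-1` [set y | 0 <= y]))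
   `&` ((fun x => dotp (const_mx 1) x) @^-1` [set 1]).
  apply/seteqP; split => x /=.
    move=> [x0 x1]; split; first by move=> j _; exact: x0.
    by rewrite dotpE (eq_bigr (fun j => x 0 j)) // => j _; rewrite mxE mul1r.
  move=> [x0 x1]; split; first by move=> j; exact: x0.
  by rewrite -x1 dotpE; apply: eq_bigr => j _; rewrite mxE mul1r.
apply: closedI.
  apply: closed_bigI => j _; apply: preimage_closed; last exact: closed_ge.
  move=> y _; exact: coord_continuous.
apply: preimage_closed; last exact: closed_eq.
move=> y _; exact: dotp_continuous.
Qed.

Lemma simplex_compact n : compact (simplex R n).
Proof.
have Hb := @rV_compact R n (fun=> `[(0:R), 1]%classic) (fun=> @segment_compact R 0 1).
apply: (subclosed_compact (simplex_closed n) Hb).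
move=> v Sv i /=; rewrite in_itv /=; apply/andP; split.
  by case: Sv.
exact: simplex_le1.
Qed.

Lemma dir_deriv n (f : 'rV[R]_n -> R) a v : differentiable f a ->
  (fun h : R => h^-1 * (f (h *: v + a) - f a)) @ 0^'+ --> 'd f a v.
Proof.
move=> df; rewrite -deriveE //; apply: cvg_dnbhs_at_right.
have := @diff_derivable _ _ _ f a v df.
rewrite /derivable.
move=> H; exact: H.
Qed.

Lemma diff_first n (D : 'rV[R]_n * 'rV[R]_n -> R) p q :
  differentiable D (p, q) -> differentiable (fun y => D (y, q)) p.
Proof.
move=> dD.
apply: (@differentiable_comp _ _ _ _ (fun y => (y, q)) D p).
  apply: differentiable_pair; [exact: ex_diff | exact: differentiable_cst].
exact: dD.
Qed.

Lemma key n m (Rm : 'M[R]_(n, m)) (D : 'rV[R]_m * 'rV[R]_m -> R) eps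
  (nu : 'rV[R]_n -> R) (pi pi' : 'rV[R]_n) (q : 'rV[R]_m) :
  (forall x, simplex R m x -> differentiable (fun y => D (y, q)) x) ->
  differentiable nu pi ->
  simplex R n pi -> simplex R n pi' -> simplex R m q ->
  (forall pi'', simplex R n pi'' ->
     fobj Rm D eps nu pi q <= fobj Rm D eps nu pi'' q) ->
  exists p, [/\ simplex R m p,
     0 <= dotp (pi' - pi) (- (p *m Rm^T) + eps *: grad nu pi) &
     forall p'', simplex R m p'' -> 0 <= dotp (p'' - p) (pi *m Rm + gradp D p q)].
Proof.
move=> dD dnu Spi Spi' Sq opt.
pose S := simplex R m.
pose h (x : 'rV[R]_n) (p : 'rV[R]_m) := - dotp (x *m Rm) p - D (p, q).
pose g x := sup [set h x p | p in S].
have fE : forall x, fobj Rm D eps nu x q = g x + eps * nu x by [].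
have hcont : forall x p, S p -> {for p, continuous (h x)}.
  move=> x p Sp.
  have cD := differentiable_continuous (dD p Sp).
  apply: (@cvgB _ _ _ (nbhs p) (nbhs_filter p) (fun p0 => - dotp (x *m Rm) p0)
     (fun p0 => D (p0, q))); last exact: cD.
  apply: (@cvgN _ _ _ (nbhs p) (nbhs_filter p) (fun p0 => dotp (x *m Rm) p0)).
  exact: dotp_continuous.
have hsup : forall x, has_sup [set h x p | p in S].
  move=> x; split; first by exists (h x q), q.
  have hc : {within S, continuous (h x)}.
    by apply: continuous_in_subspaceT => p; rewrite inE => Sp; exact: hcont.
  have cpt := continuous_compact hc (simplex_compact m).
  have [M0 [_ HM]] := compact_bounded cpt.
  exists (M0 + 1) => y Sy.
  have := HM (M0 + 1) ltac:(by rewrite ltrDl ltr01) y Sy.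
  by move=> /= /(le_trans (ler_norm y)).
pose d := pi' - pi.
pose w := d *m Rm.
pose c := eps * 'd nu pi d.
pose M := \sum_j `|w 0 j|.
have hshift : forall t p, h (t *: d + pi) p = h pi p - t * dotp w p.
  by move=> t p; rewrite /h mulmxDl -scalemxAl dotpDl dotpZl; ring.
have wb : forall p, S p -> `|dotp w p| <= M by move=> p Sp; exact: dotp_bound.
have M0 : 0 <= M by apply: sumr_ge0 => j _.
have hub : forall x p, S p -> h x p <= g x.
  by move=> x p Sp; apply: sup_upper_bound (hsup x) _ _; exists p.
pose K (e : R) := [set p | [/\ S p, dotp w p <= c + e &
   forall p', S p' -> h pi p' - e <= h pi p]].
have Kne : forall e, 0 < e -> K e !=set0.
  move=> e e0.
  have cvQ := @dir_deriv _ nu pi d dnu.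
  have cvQ' : (fun t => eps * (t^-1 * (nu (t *: d + pi) - nu pi))) @ 0^'+ --> c.
    exact: cvgMl_tmp.
  have e20 : 0 < e / 2 by rewrite divr_gt0.
  have H2 := proj1 (cvgrPdist_lt _ _) cvQ' (e / 2) e20.
  have MM0 : 0 < 2 * M + 2 by lra.
  have : \forall t \near 0^'+, [/\ 0 < t, t < 1, t < e / (2 * M + 2) &
      `|c - eps * (t^-1 * (nu (t *: d + pi) - nu pi))| < e / 2].
    near=> t; split.
    - near: t; exact: nbhs_right_gt.
    - near: t; apply: nbhs_right_lt; exact: ltr01.
    - near: t; apply: nbhs_right_lt; exact: divr_gt0.
    - near: t; exact: H2.
  move=> /filter_ex [t [t0 t1 t2 t3]].
  pose xt := t *: d + pi.
  have Sxt : simplex R n xt.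
    by apply: simplex_conv => //; rewrite (ltW t0) (ltW t1).
  have tt0 : 0 < t ^+ 2 by rewrite exprn_gt0.
  have [_ [p Sp <-] ptb] := sup_adherent tt0 (hsup xt).
  have F1 := opt xt Sxt; rewrite !fE in F1.
  rewrite /xt hshift in ptb.
  have F3 := hub pi p Sp.
  set Q := t^-1 * (nu xt - nu pi) in t3.
  have eQ : nu xt - nu pi = t * Q by rewrite /Q mulrA mulfV ?mul1r // gt_eqF.
  move: t3; rewrite ltr_norml => /andP[t3a t3b].
  move: t2; rewrite ltr_pdivlMr // => t2.
  have tM0 : 0 <= t * M by rewrite mulr_ge0 // ltW.
  have A3 : 2 * (t * M) + 2 * t < e by move: t2; rewrite mulrDr; lra.
  have A2 : t ^+ 2 <= t by rewrite expr2 ger_pMr // ltW.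
  exists p; split => //.
    have key1 : t * dotp w p < t * (t + eps * Q).
      rewrite mulrDr -expr2 mulrCA -eQ mulrBr.
      rewrite /g /xt in F1 F3 *; lra.
    move: key1; rewrite ltr_pM2l // => key1.
    lra.
  move=> p' Sp'.
  have F4 := hub xt p' Sp'; rewrite /xt hshift in F4.
  have A1 : t * dotp w p' - t * dotp w p <= 2 * (t * M).
    rewrite -mulrBr mulrCA; apply: ler_wpM2l; first exact: ltW.
    have := wb p' Sp'; have := wb p Sp.
    rewrite !ler_norml => /andP[? ?] /andP[? ?]; lra.
  rewrite /g in F4; lra.
have Kmono : forall a b, a <= b -> K a `<=` K b.
  move=> a b ab p [Sp Hw Hh]; split => //; first lra.
  by move=> p' Sp'; have := Hh p' Sp'; lra.
pose Fl := filter_from [set e : R | 0 < e] K.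
have FF : Filter Fl.
  apply: filter_from_filter; first by exists 1; rewrite /= ltr01.
  move=> i j i0 j0; exists (Order.min i j); first by rewrite /= lt_min i0 j0.
  by move=> p Kp; split; apply: Kmono Kp; rewrite ge_min lexx ?orbT.
have PF : ProperFilter Fl by apply: filter_from_proper.
have FS : Fl S by exists 1; [rewrite /= ltr01 | move=> p []].
have [pb [Spb clpb]] := simplex_compact m Fl PF FS.
have Hw : dotp w pb <= c.
  apply/ler_addgt0Pr => e e0.
  have e20 : 0 < e / 2 by rewrite divr_gt0.
  have nb := proj1 (cvgrPdist_lt _ _) (@dotp_continuous _ w pb) (e / 2) e20.
  have [p [[Sp Hp _] Bp]] := clpb _ _ (ex_intro2 _ _ (e / 2) e20 (@subset_refl _ (K (e / 2)))) (nb (nbhs_filter _)).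
  move: Bp; rewrite /= ltr_norml => /andP[? ?]; lra.
have Hh : forall p', S p' -> h pi p' <= h pi pb.
  move=> p' Sp'; apply/ler_addgt0Pr => e e0.
  have e20 : 0 < e / 2 by rewrite divr_gt0.
  have nb := proj1 (cvgrPdist_lt _ _) (hcont pi pb Spb) (e / 2) e20.
  have [p [[Sp _ Hp] Bp]] := clpb _ _ (ex_intro2 _ _ (e / 2) e20 (@subset_refl _ (K (e / 2)))) (nb (nbhs_filter _)).
  have := Hp p' Sp'.
  move: Bp; rewrite /= ltr_norml => /andP[? ?]; lra.
exists pb; split => //.
  rewrite dotpDr dotpNr dotpZr dotp_grad dotp_mulT -/d -/w.
  rewrite /c in Hw; lra.
move=> p'' Sp''.
pose e := p'' - pb.
have cvD := @dir_deriv _ (fun y => D (y, q)) pb e (dD pb Spb).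
have lb : - dotp (pi *m Rm) e <= 'd (fun y => D (y, q)) pb e.
  apply: (cvgr_to_ge cvD).
  near=> s.
  have s0 : 0 < s by near: s; exact: nbhs_right_gt.
  have s1 : s < 1 by near: s; apply: nbhs_right_lt; exact: ltr01.
  have Ss : S (s *: e + pb) by apply: simplex_conv => //; rewrite (ltW s0) (ltW s1).
  have := Hh _ Ss; rewrite /h dotpDr dotpZr => Hs.
  rewrite ler_pdivlMl //; lra.
rewrite dotpDr /gradp dotp_grad -/e dotpC; lra.
Unshelve. all: by end_near.
Qed.
End Helpers.

Lemma pair_le (R : realType) n (a a' X X' : 'rV[R]_n) :
  0 <= dotp (a' - a) X -> 0 <= dotp (a - a') X' -> dotp (a - a') (X - X') <= 0.
Proof.
move=> h1 h2.
have E : dotp (a - a') X = - dotp (a' - a) X by rewrite -dotpNl opprB.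
rewrite dotpBr E; lra.
Qed.
Arguments pair_le {R n a a' X X'}.

Theorem proposition1 (R : realType) (n1 n2 : nat)
  (R1 : 'M[R]_(n1, n2)) (R2 : 'M[R]_(n2, n1))
  (eps1 eps2 : R) (nu1 : 'rV[R]_n1 -> R) (nu2 : 'rV[R]_n2 -> R)
  (D1 : 'rV[R]_n2 * 'rV[R]_n2 -> R) (D2 : 'rV[R]_n1 * 'rV[R]_n1 -> R) :
  0 < eps1 -> 0 < eps2 ->
  (exists U : set 'rV[R]_n1, [/\ open U, simplex R n1 `<=` U &
     forall x, U x -> differentiable nu1 x]) ->
  (exists U : set 'rV[R]_n2, [/\ open U, simplex R n2 `<=` U &
     forall x, U x -> differentiable nu2 x]) ->
  strictly_convex_on (simplex R n1) nu1 ->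
  strictly_convex_on (simplex R n2) nu2 ->
  (exists U : set ('rV[R]_n2 * 'rV[R]_n2),
     [/\ open U, simplex R n2 `*` simplex R n2 `<=` U &
         forall x, U x -> differentiable D1 x]) ->
  (exists U : set ('rV[R]_n1 * 'rV[R]_n1),
     [/\ open U, simplex R n1 `*` simplex R n1 `<=` U &
         forall x, U x -> differentiable D2 x]) ->
  convex_first_arg D1 -> convex_first_arg D2 ->
  (* strict monotonicity of the gradient operator F(.; R) on Z *)
  (forall (pi1 pi1' : 'rV[R]_n1) (pi2 pi2' : 'rV[R]_n2)
          (p1 p1' : 'rV[R]_n2) (p2 p2' : 'rV[R]_n1),
     simplex R n1 pi1 -> simplex R n2 pi2 -> simplex R n2 p1 -> simplex R n1 p2 ->
     simplex R n1 pi1' -> simplex R n2 pi2' -> simplex R n2 p1' -> simplex R n1 p2' ->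
     (pi1, pi2, p1, p2) <> (pi1', pi2', p1', p2') ->
     0 < F_pairing R1 R2 D1 D2 eps1 eps2 nu1 nu2 pi1 pi2 p1 p2 pi1' pi2' p1' p2') ->
  forall (pi1 pi1' : 'rV[R]_n1) (pi2 pi2' : 'rV[R]_n2),
    is_RQE R1 R2 D1 D2 eps1 eps2 nu1 nu2 pi1 pi2 ->
    is_RQE R1 R2 D1 D2 eps1 eps2 nu1 nu2 pi1' pi2' ->
    pi1 = pi1' /\ pi2 = pi2'.
Proof.
move=> _ _ [U1 [oU1 SU1 dU1]] [U2 [oU2 SU2 dU2]] _ _ [V1 [oV1 SV1 dV1]]
  [V2 [oV2 SV2 dV2]] _ _ mono pi1 pi1' pi2 pi2' [S1 S2 o1 o2] [S1' S2' o1' o2'].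
have dD1 : forall q, simplex R n2 q -> forall x, simplex R n2 x ->
    differentiable (fun y => D1 (y, q)) x.
  by move=> q Sq x Sx; apply: diff_first; apply: dV1; apply: SV1.
have dD2 : forall q, simplex R n1 q -> forall x, simplex R n1 x ->
    differentiable (fun y => D2 (y, q)) x.
  by move=> q Sq x Sx; apply: diff_first; apply: dV2; apply: SV2.
have [p1 [Sp1 A1 B1]] := @key R n1 n2 R1 D1 eps1 nu1 pi1 pi1' pi2
  (dD1 _ S2) (dU1 _ (SU1 _ S1)) S1 S1' S2 o1.
have [p2 [Sp2 A2 B2]] := @key R n2 n1 R2 D2 eps2 nu2 pi2 pi2' pi1
  (dD2 _ S1) (dU2 _ (SU2 _ S2)) S2 S2' S1 o2.
have [p1' [Sp1' A1' B1']] := @key R n1 n2 R1 D1 eps1 nu1 pi1' pi1 pi2'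
  (dD1 _ S2') (dU1 _ (SU1 _ S1')) S1' S1 S2' o1'.
have [p2' [Sp2' A2' B2']] := @key R n2 n1 R2 D2 eps2 nu2 pi2' pi2 pi1'
  (dD2 _ S1') (dU2 _ (SU2 _ S2')) S2' S2 S1' o2'.
have Fle : F_pairing R1 R2 D1 D2 eps1 eps2 nu1 nu2 pi1 pi2 p1 p2 pi1' pi2' p1' p2' <= 0.
  have T1 := pair_le A1 A1'; have T2 := pair_le A2 A2'.
  have T3 := pair_le (B1 _ Sp1') (B1' _ Sp1); have T4 := pair_le (B2 _ Sp2') (B2' _ Sp2).
  have := lerD (lerD (lerD T1 T2) T3) T4.
  by rewrite !addr0.
have [e1|ne1] := eqVneq pi1 pi1'; have [e2|ne2] := eqVneq pi2 pi2' => //.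
- have H := mono pi1 pi1' pi2 pi2' p1 p1' p2 p2' S1 S2 Sp1 Sp2 S1' S2' Sp1' Sp2'.
  have := lt_le_trans (H (fun E => ltac:(case: E => _ E2 _ _; exact: (negP ne2) (introT eqP E2)))) Fle.
  by rewrite ltxx.
- have H := mono pi1 pi1' pi2 pi2' p1 p1' p2 p2' S1 S2 Sp1 Sp2 S1' S2' Sp1' Sp2'.
  have := lt_le_trans (H (fun E => ltac:(case: E => E1 _ _ _; exact: (negP ne1) (introT eqP E1)))) Fle.
  by rewrite ltxx.
- have H := mono pi1 pi1' pi2 pi2' p1 p1' p2 p2' S1 S2 Sp1 Sp2 S1' S2' Sp1' Sp2'.
  have := lt_le_trans (H (fun E => ltac:(case: E => E1 _ _ _; exact: (negP ne1) (introT eqP E1)))) Fle.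
  by rewrite ltxx.
Qed.
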